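(* Let $\epsilon\in\{1,-1\}$ and $j\ge1$. In each of the following three hierarchies (defined in the context), the $j$-th flow $q_{t_j}=F_j[q,r]$, $r_{t_j}=G_j[q,r]$ admits the constraint $r=\epsilon\bar q$, in the sense that for every smooth $q:\mathbb{R}^2\to\mathbb{C}$, $$G_j[q,\epsilon\bar q]=\epsilon\,\overline{F_j[q,\epsilon\bar q]},$$ so the constraint is preserved by the flow and the system reduces to the single equation $q_{t_j}=F_j[q,\epsilon\bar q]$: (1) the Kaup–Newell hierarchy; (2) the type II hierarchy; (3) the $\mathcal{B}$-twisted hierarchy with parameter $\alpha$, where $\alpha$ is purely imaginary ($\mathrm{Re}\,\alpha=0$).
   Context: Let $a=\mathrm{diag}(i,-i)$. For smooth complex-valued functions $q(x,t)$, $r(x,t)$ set $u=\begin{pmatrix}0&q\\ r&0\end{pmatrix}$. Consider formal series $Q=\sum_{k\le 2}Q_k\lambda^k$ in a formal parameter $\lambda$, whose coefficients $Q_k$ are traceless $2\times2$ matrices of smooth functions of $(x,t)$, with $Q_k$ diagonal for $k$ even and off-diagonal for $k$ odd. For a diagonal traceless matrix function $P$ (possibly $0$), let $Q^{P}$ denote the unique such series with $Q_2=a$, $Q_1=u$, satisfying $[\partial_x+a\lambda^2+u\lambda+P,\;Q]=0$ (i.e. $\partial_xQ+[a\lambda^2+u\lambda+P,Q]=0$ coefficientwise) and $Q^2=-\lambda^4 I$; its coefficients are differential polynomials in $q,r$. (1) Kaup–Newell hierarchy: with $Q=Q^{0}$, the $j$-th flow is $u_{t_j}=\partial_xQ_{3-2j}$.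 (2) Type II hierarchy: with $P_0=\frac{i}{2}\mathrm{diag}(qr,-qr)$ and $Q=Q^{P_0}$, the $j$-th flow is $u_{t_j}=\partial_xQ_{3-2j}+[P_0,Q_{3-2j}]+[u,Q_{2-2j}]$. (3) $\mathcal{B}$-twisted hierarchy with parameter $\alpha\in\mathbb{C}$: with $P_0^{\alpha}=-\alpha\,\mathrm{diag}(qr,-qr)$ and $Q=Q^{P_0^\alpha}$, the $j$-th flow is $u_{t_j}=\partial_xQ_{3-2j}+[P_0^\alpha,Q_{3-2j}]+[u,Q_{2-2j}-\mathcal{B}(Q_{2-2j})]$, where $\mathcal{B}(A)=(1-2\alpha i)A$ for diagonal $A$ (so the last term equals $2\alpha i[u,Q_{2-2j}]$). In each case the right-hand side is off-diagonal, of the form $\begin{pmatrix}0&F_j[q,r]\\ G_j[q,r]&0\end{pmatrix}$ with $F_j,G_j$ differential polynomials in $q,r$, and the flow is the system $q_{t_j}=F_j[q,r]$, $r_{t_j}=G_j[q,r]$. (For $j=2$: (1) gives $q_t=\frac12(iq_{xx}+(q^2r)_x)$, $r_t=\frac12(-ir_{xx}+(qr^2)_x)$.) *)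

(* Defs.v *)
From Stdlib Require Import Reals List Arith ClassicalEpsilon.
Open Scope R_scope.

Definition CC := (R * R)%type.
Definition Cofr (a : R) : CC := (a, 0).
Definition C0 : CC := (0, 0).
Definition C1 : CC := (1, 0).
Definition Ci : CC := (0, 1).
Definition Cadd (z w : CC) : CC := (fst z + fst w, snd z + snd w).
Definition Copp (z : CC) : CC := (- fst z, - snd z).
Definition Cmul (z w : CC) : CC :=
  (fst z * fst w - snd z * snd w, fst z * snd w + snd z * fst w).
Definition Cconj (z : CC) : CC := (fst z, - snd z).

Definition Fn := R -> R -> CC.
Definition fconst (c : CC) : Fn := fun _ _ => c.
Definition fzero : Fn := fconst C0.
Definition fadd (f g : Fn) : Fn := fun x t => Cadd (f x t) (g x t).
Definition fopp (f : Fn) : Fn := fun x t => Copp (f x t).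
Definition fmul (f g : Fn) : Fn := fun x t => Cmul (f x t) (g x t).
Definition fconj (f : Fn) : Fn := fun x t => Cconj (f x t).
Definition fscal (c : CC) (f : Fn) : Fn := fmul (fconst c) f.

(** Derivative of a real function at a point (the value l with
    derivable_pt_lim g x l; meaningful whenever g is differentiable at x). *)
Definition pderiv (g : R -> R) (x : R) : R :=
  epsilon (inhabits 0) (fun l => derivable_pt_lim g x l).

Definition Dx (f : Fn) : Fn := fun x t =>
  (pderiv (fun y => fst (f y t)) x, pderiv (fun y => snd (f y t)) x).
Definition Dt (f : Fn) : Fn := fun x t =>
  (pderiv (fun s => fst (f x s)) t, pderiv (fun s => snd (f x s)) t).

Definition derivable_x (f : Fn) (x t : R) : Prop :=
  exists l1 l2, derivable_pt_lim (fun y => fst (f y t)) x l1 /\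
                derivable_pt_lim (fun y => snd (f y t)) x l2.
Definition derivable_t (f : Fn) (x t : R) : Prop :=
  exists l1 l2, derivable_pt_lim (fun s => fst (f x s)) t l1 /\
                derivable_pt_lim (fun s => snd (f x s)) t l2.
Definition continuous2 (f : Fn) : Prop :=
  forall x t eps, 0 < eps -> exists delta, 0 < delta /\
    forall x' t', Rabs (x' - x) < delta -> Rabs (t' - t) < delta ->
      Rabs (fst (f x' t') - fst (f x t)) < eps /\
      Rabs (snd (f x' t') - snd (f x t)) < eps.

Definition iterD (w : list bool) (f : Fn) : Fn :=
  fold_right (fun (b : bool) g => if b then Dx g else Dt g) f w.

Definition smooth (f : Fn) : Prop :=
  forall w : list bool,
    (forall x t, derivable_x (iterD w f) x t) /\
    (forall x t, derivable_t (iterD w f) x t) /\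
    continuous2 (iterD w f).

Record M2 := mkM2 { m11 : Fn; m12 : Fn; m21 : Fn; m22 : Fn }.
Definition M0 : M2 := mkM2 fzero fzero fzero fzero.
Definition MI : M2 := mkM2 (fconst C1) fzero fzero (fconst C1).
Definition Mdiag (d1 d2 : Fn) : M2 := mkM2 d1 fzero fzero d2.
Definition Moff (b c : Fn) : M2 := mkM2 fzero b c fzero.
Definition Madd (A B : M2) : M2 :=
  mkM2 (fadd (m11 A) (m11 B)) (fadd (m12 A) (m12 B))
       (fadd (m21 A) (m21 B)) (fadd (m22 A) (m22 B)).
Definition Mopp (A : M2) : M2 :=
  mkM2 (fopp (m11 A)) (fopp (m12 A)) (fopp (m21 A)) (fopp (m22 A)).
Definition Msub (A B : M2) : M2 := Madd A (Mopp B).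
Definition Mmul (A B : M2) : M2 :=
  mkM2 (fadd (fmul (m11 A) (m11 B)) (fmul (m12 A) (m21 B)))
       (fadd (fmul (m11 A) (m12 B)) (fmul (m12 A) (m22 B)))
       (fadd (fmul (m21 A) (m11 B)) (fmul (m22 A) (m21 B)))
       (fadd (fmul (m21 A) (m12 B)) (fmul (m22 A) (m22 B))).
Definition Mcomm (A B : M2) : M2 := Msub (Mmul A B) (Mmul B A).
Definition MDx (A : M2) : M2 := mkM2 (Dx (m11 A)) (Dx (m12 A)) (Dx (m21 A)) (Dx (m22 A)).
Definition Mscal (c : CC) (A : M2) : M2 :=
  mkM2 (fscal c (m11 A)) (fscal c (m12 A)) (fscal c (m21 A)) (fscal c (m22 A)).

Definition is_diag (A : M2) : Prop := m12 A = fzero /\ m21 A = fzero.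
Definition is_offdiag (A : M2) : Prop := m11 A = fzero /\ m22 A = fzero.
Definition traceless (A : M2) : Prop := fadd (m11 A) (m22 A) = fzero.
Definition M_smooth (A : M2) : Prop :=
  smooth (m11 A) /\ smooth (m12 A) /\ smooth (m21 A) /\ smooth (m22 A).

Definition a_mat : M2 := Mdiag (fconst Ci) (fconst (Copp Ci)).
Definition u_mat (q r : Fn) : M2 := Moff q r.

(** A formal series Q = sum_{k <= 2} Q_k lambda^k is encoded as a sequence
    Qs : nat -> M2 with  Qs n = Q_{2-n}.  *)

(** Coefficient of lambda^(4-n) in Q^2:  sum_{i=0}^{n} Qs i * Qs (n-i). *)
Definition sq_coef (Qs : nat -> M2) (n : nat) : M2 :=
  fold_right (fun i acc => Madd (Mmul (Qs i) (Qs (n - i)%nat)) acc) M0 (seq 0 (S n)).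

(** Qs is the series Q^P (for u = u_mat q r and diagonal traceless P):
    Q_2 = a, Q_1 = u, coefficients traceless smooth, Q_k diagonal for k even and
    off-diagonal for k odd, [d_x + a lambda^2 + u lambda + P, Q] = 0
    coefficientwise (coefficient of lambda^(2-n) is
    d_x Q_{2-n} + [a, Q_{-n}] + [u, Q_{1-n}] + [P, Q_{2-n}]; the coefficients of
    lambda^3, lambda^4 vanish identically), and Q^2 = -lambda^4 I. *)
Definition is_Q (q r : Fn) (P : M2) (Qs : nat -> M2) : Prop :=
  Qs 0%nat = a_mat /\ Qs 1%nat = u_mat q r /\
  (forall n : nat, traceless (Qs n) /\ M_smooth (Qs n) /\
     (Nat.Even n -> is_diag (Qs n)) /\ (Nat.Odd n -> is_offdiag (Qs n))) /\
  (forall n : nat,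
     Madd (Madd (Madd (MDx (Qs n)) (Mcomm a_mat (Qs (n + 2)%nat)))
                (Mcomm (u_mat q r) (Qs (n + 1)%nat)))
          (Mcomm P (Qs n)) = M0) /\
  (forall n : nat, sq_coef Qs n = if Nat.eqb n 0 then Mopp MI else M0).

(** Q_{3-2j} = Qs (2j-1), Q_{2-2j} = Qs (2j). *)

Definition rhs_KN (Qs : nat -> M2) (j : nat) : M2 := MDx (Qs (2 * j - 1)%nat).

Definition P0_II (q r : Fn) : M2 :=
  Mdiag (fscal (0, / 2) (fmul q r)) (fopp (fscal (0, / 2) (fmul q r))).
Definition rhs_II (q r : Fn) (Qs : nat -> M2) (j : nat) : M2 :=
  Madd (Madd (MDx (Qs (2 * j - 1)%nat)) (Mcomm (P0_II q r) (Qs (2 * j - 1)%nat)))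
       (Mcomm (u_mat q r) (Qs (2 * j)%nat)).

(** (3) B-twisted: P_0^alpha = -alpha diag(qr, -qr), B(A) = (1 - 2 alpha i) A
    on diagonal A (it is only applied to the diagonal Q_{2-2j}). *)
Definition P0_B (alpha : CC) (q r : Fn) : M2 :=
  Mdiag (fscal (Copp alpha) (fmul q r)) (fopp (fscal (Copp alpha) (fmul q r))).
Definition B_op (alpha : CC) (A : M2) : M2 :=
  Mscal (Cadd C1 (Copp (Cmul (Cofr 2) (Cmul alpha Ci)))) A.
Definition rhs_B (alpha : CC) (q r : Fn) (Qs : nat -> M2) (j : nat) : M2 :=
  Madd (Madd (MDx (Qs (2 * j - 1)%nat)) (Mcomm (P0_B alpha q r) (Qs (2 * j - 1)%nat)))
       (Mcomm (u_mat q r) (Msub (Qs (2 * j)%nat) (B_op alpha (Qs (2 * j)%nat)))).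

Definition admits_constraint (eps : R) (M : M2) : Prop :=
  forall x t, m21 M x t = Cmul (Cofr eps) (Cconj (m12 M x t)).

(* Main.v *)
Require Import Defs.
From Stdlib Require Import Reals List Arith ClassicalEpsilon.
From Stdlib Require Import FunctionalExtensionality Lra Lia.
Open Scope R_scope.

Definition Ssym (eps : R) (A : M2) : Prop := forall x t,
  m22 A x t = Cconj (m11 A x t) /\ m21 A x t = Cmul (Cofr eps) (Cconj (m12 A x t)).

Lemma CC_eq (z w : CC) : fst z = fst w -> snd z = snd w -> z = w.
Proof. destruct z, w; simpl; intros; subst; reflexivity. Qed.

Ltac cfin := unfold Cadd, Cmul, Cconj, Cofr, Copp, C0, C1, Ci in *; simpl in *;
  repeat split; try (apply CC_eq; simpl; ring).

Lemma S_mul eps A B : (eps=1\/eps=-1) -> Ssym eps A -> Ssym eps B -> Ssym eps (Mmul A B).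
Proof.
  intros He HA HB x t. destruct (HA x t) as [A1 A2]; destruct (HB x t) as [B1 B2].
  simpl. unfold fadd, fmul. rewrite A1, A2, B1, B2.
  destruct (m11 A x t), (m12 A x t), (m11 B x t), (m12 B x t).
  destruct He; subst; cfin.
Qed.

Lemma S_add eps A B : (eps=1\/eps=-1) -> Ssym eps A -> Ssym eps B -> Ssym eps (Madd A B).
Proof.
  intros He HA HB x t. destruct (HA x t) as [A1 A2]; destruct (HB x t) as [B1 B2].
  simpl. unfold fadd. rewrite A1, A2, B1, B2.
  destruct (m11 A x t), (m12 A x t), (m11 B x t), (m12 B x t).
  destruct He; subst; cfin.
Qed.

Lemma S_opp eps A : (eps=1\/eps=-1) -> Ssym eps A -> Ssym eps (Mopp A).
Proof.
  intros He HA x t. destruct (HA x t) as [A1 A2].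
  simpl. unfold fopp. rewrite A1, A2.
  destruct (m11 A x t), (m12 A x t).
  destruct He; subst; cfin.
Qed.

Lemma S_scal eps c A : (eps=1\/eps=-1) -> snd c = 0 -> Ssym eps A -> Ssym eps (Mscal c A).
Proof.
  intros He Hc HA x t. destruct (HA x t) as [A1 A2].
  simpl. unfold fscal, fmul, fconst. rewrite A1, A2. destruct c as [c1 c2]; simpl in Hc; subst.
  destruct (m11 A x t), (m12 A x t).
  destruct He; subst; cfin.
Qed.

Lemma S_comm eps A B : (eps=1\/eps=-1) -> Ssym eps A -> Ssym eps B -> Ssym eps (Mcomm A B).
Proof.
  intros. unfold Mcomm, Msub. apply S_add; auto. apply S_mul; auto.
  apply S_opp; auto. apply S_mul; auto.
Qed.

Lemma S_M0 eps : Ssym eps M0.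
Proof. intros x t; simpl; unfold fzero, fconst; cfin. Qed.

Lemma S_a eps : Ssym eps a_mat.
Proof. intros x t; simpl; unfold fzero, fconst; cfin. Qed.

Lemma S_u eps q : Ssym eps (u_mat q (fscal (Cofr eps) (fconj q))).
Proof. intros x t; simpl; unfold fzero, fconst, fscal, fmul, fconj; cfin. Qed.

Lemma S_PII eps q : (eps=1\/eps=-1) -> Ssym eps (P0_II q (fscal (Cofr eps) (fconj q))).
Proof. intros He x t; simpl; unfold fzero, fconst, fscal, fmul, fconj, fopp.
  destruct (q x t). destruct He; subst; cfin. Qed.

Lemma S_PB eps q alpha : (eps=1\/eps=-1) -> fst alpha = 0 ->
  Ssym eps (P0_B alpha q (fscal (Cofr eps) (fconj q))).
Proof. intros He Ha x t; simpl; unfold fzero, fconst, fscal, fmul, fconj, fopp.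
  destruct alpha; simpl in Ha; subst.
  destruct (q x t). destruct He; subst; cfin. Qed.

Lemma pderiv_eq g x l : derivable_pt_lim g x l -> pderiv g x = l.
Proof.
  intro H. unfold pderiv.
  apply (uniqueness_limite g x). 2: exact H.
  apply epsilon_spec. exists l; exact H.
Qed.

Lemma pderiv_scal g c x l : derivable_pt_lim g x l -> pderiv (fun y => c * g y) x = c * l.
Proof.
  intro H. apply pderiv_eq. apply (derivable_pt_lim_scal g c x l H).
Qed.

Lemma S_Dx eps A : (eps=1\/eps=-1) -> Ssym eps A ->
  (forall x t, derivable_x (m11 A) x t) -> (forall x t, derivable_x (m12 A) x t) ->
  Ssym eps (MDx A).
Proof.
  intros He HA D1 D2 x t. simpl. unfold Defs.Dx.
  destruct (D1 x t) as [l1 [l2 [H1 H2]]].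
  destruct (D2 x t) as [l3 [l4 [H3 H4]]].
  assert (E1 : (fun y => fst (m22 A y t)) = (fun y => 1 * fst (m11 A y t))).
  { apply functional_extensionality; intro y. destruct (HA y t) as [-> _].
    destruct (m11 A y t); simpl; ring. }
  assert (E2 : (fun y => snd (m22 A y t)) = (fun y => -1 * snd (m11 A y t))).
  { apply functional_extensionality; intro y. destruct (HA y t) as [-> _].
    destruct (m11 A y t); simpl; ring. }
  assert (E3 : (fun y => fst (m21 A y t)) = (fun y => eps * fst (m12 A y t))).
  { apply functional_extensionality; intro y. destruct (HA y t) as [_ ->].
    destruct (m12 A y t); simpl; ring. }
  assert (E4 : (fun y => snd (m21 A y t)) = (fun y => (-eps) * snd (m12 A y t))).
  { apply functional_extensionality; intro y. destruct (HA y t) as [_ ->].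
    destruct (m12 A y t); simpl; ring. }
  rewrite E1, E2, E3, E4.
  rewrite (pderiv_scal _ _ _ _ H1), (pderiv_scal _ _ _ _ H2),
    (pderiv_scal _ _ _ _ H3), (pderiv_scal _ _ _ _ H4).
  rewrite (pderiv_eq _ _ _ H1), (pderiv_eq _ _ _ H2), (pderiv_eq _ _ _ H3), (pderiv_eq _ _ _ H4).
  cfin.
Qed.

Lemma M2_ext A B' : (forall x t, m11 A x t = m11 B' x t) -> (forall x t, m12 A x t = m12 B' x t) ->
  (forall x t, m21 A x t = m21 B' x t) -> (forall x t, m22 A x t = m22 B' x t) -> A = B'.
Proof.
  destruct A, B'; simpl; intros H1 H2 H3 H4.
  f_equal; apply functional_extensionality; intro x; apply functional_extensionality; intro t; auto.
Qed.

Lemma reassoc A C E F : Madd (Madd (Madd A C) E) F = Madd C (Madd (Madd A E) F).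
Proof. apply M2_ext; intros; simpl; unfold fadd; cfin. Qed.

Lemma fold_acc (G : nat -> M2) acc l :
  fold_right (fun i a => Madd (G i) a) acc l = Madd (fold_right (fun i a => Madd (G i) a) M0 l) acc.
Proof.
  induction l as [|i l IH]; simpl.
  - apply M2_ext; intros; simpl; unfold fadd, fzero, fconst; cfin.
  - rewrite IH. apply M2_ext; intros; simpl; unfold fadd; cfin.
Qed.

Lemma S_fold eps (G : nat -> M2) l : (eps=1\/eps=-1) ->
  (forall i, In i l -> Ssym eps (G i)) -> Ssym eps (fold_right (fun i a => Madd (G i) a) M0 l).
Proof.
  intros He. induction l as [|i l IH]; simpl; intros H.
  - apply S_M0.
  - apply S_add; auto.
Qed.

Lemma off_det eps X T : (eps=1\/eps=-1) -> Ssym eps T -> Madd (Mcomm a_mat X) T = M0 ->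
  forall x t, m21 X x t = Cmul (Cofr eps) (Cconj (m12 X x t)).
Proof.
  intros He HT H x t.
  assert (H12 := f_equal (fun M => m12 M x t) H).
  assert (H21 := f_equal (fun M => m21 M x t) H).
  destruct (HT x t) as [_ T2].
  simpl in H12, H21. unfold fadd, fmul, fopp, fconst, fzero in H12, H21.
  rewrite T2 in H21.
  destruct (m11 X x t), (m12 X x t), (m21 X x t), (m22 X x t), (m12 T x t).
  unfold Cadd, Cmul, Cconj, Cofr, Copp, C0, Ci in *; simpl in *.
  injection H12; injection H21; intros.
  destruct He; subst; apply CC_eq; simpl; lra.
Qed.

Lemma diag_det eps X Mi : (eps=1\/eps=-1) -> Ssym eps Mi ->
  Madd (Mmul a_mat X) (Madd Mi (Madd (Mmul X a_mat) M0)) = M0 ->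
  forall x t, m22 X x t = Cconj (m11 X x t).
Proof.
  intros He HT H x t.
  assert (H11 := f_equal (fun M => m11 M x t) H).
  assert (H22 := f_equal (fun M => m22 M x t) H).
  destruct (HT x t) as [T1 _].
  simpl in H11, H22. unfold fadd, fmul, fopp, fconst, fzero in H11, H22.
  rewrite T1 in H22.
  destruct (m11 X x t), (m12 X x t), (m21 X x t), (m22 X x t), (m11 Mi x t).
  unfold Cadd, Cmul, Cconj, Cofr, Copp, C0, Ci in *; simpl in *.
  injection H11; injection H22; intros.
  apply CC_eq; simpl; lra.
Qed.

Lemma Qsym eps q P Qs : (eps=1\/eps=-1) -> Ssym eps P ->
  is_Q q (fscal (Cofr eps) (fconj q)) P Qs -> forall n, Ssym eps (Qs n).
Proof.
  intros He HP [H0 [H1 [Hs [Hc Hq]]]].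
  assert (Hd : forall k, (forall x t, derivable_x (m11 (Qs k)) x t) /\
                         (forall x t, derivable_x (m12 (Qs k)) x t)).
  { intro k. destruct (Hs k) as [_ [[S1 [S2 _]] _]].
    split; [apply (S1 nil) | apply (S2 nil)]. }
  assert (Main : forall n k, (k <= n)%nat -> Ssym eps (Qs k)).
  2: { intro n; apply (Main n n); lia. }
  induction n as [|n IH]; intros k Hk.
  - assert (k = 0%nat) by lia; subst. rewrite H0; apply S_a.
  - destruct (Nat.le_gt_cases k n) as [Hl|Hl]; [auto|].
    assert (k = S n) by lia; subst k.
    destruct n as [|m].
    + rewrite H1; apply S_u.
    +
      set (X := Qs (S (S m))).
      assert (HT : Ssym eps (Madd (Madd (MDx (Qs m)) (Mcomm (u_mat q (fscal (Cofr eps) (fconj q))) (Qs (m+1)%nat))) (Mcomm P (Qs m)))).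
      { apply S_add; auto. apply S_add; auto.
        - apply S_Dx; auto; apply Hd.
        - apply S_comm; auto. apply S_u. apply IH; lia.
        - apply S_comm; auto. }
      assert (Hcm := Hc m). rewrite reassoc in Hcm.
      replace (m + 2)%nat with (S (S m)) in Hcm by lia. fold X in Hcm.
      assert (Hoff := off_det eps X _ He HT Hcm).
      assert (Hsq := Hq (S (S m))). simpl Nat.eqb in Hsq.
      unfold sq_coef in Hsq.
      replace (seq 0 (S (S (S m)))) with (0%nat :: seq 1 (S m) ++ (S (S m)) :: nil) in Hsq.
      2: { rewrite <- seq_S. reflexivity. }
      change (fold_right ?f ?a (?x :: ?l)) with (f x (fold_right f a l)) in Hsq.
      rewrite fold_right_app in Hsq.
      change (fold_right ?f ?a (?x :: nil)) with (f x a) in Hsq. cbv beta in Hsq.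
      rewrite fold_acc in Hsq.
      rewrite Nat.sub_0_r, Nat.sub_diag, H0 in Hsq. fold X in Hsq.
      assert (Hmid : Ssym eps (fold_right (fun i a => Madd (Mmul (Qs i) (Qs (S (S m) - i)%nat)) a) M0 (seq 1 (S m)))).
      { apply S_fold; auto. intros i Hi. apply in_seq in Hi.
        apply S_mul; auto; apply IH; lia. }
      assert (Hdiag := diag_det eps X _ He Hmid Hsq).
      intros x t; split; auto.
Qed.

Lemma S_adm eps M : Ssym eps M -> admits_constraint eps M.
Proof. intros H x t. apply (H x t). Qed.

Theorem theorem4p1 :
  forall (eps : R) (j : nat) (q : Fn),
    (eps = 1 \/ eps = -1) -> (1 <= j)%nat -> smooth q ->
    let r := fscal (Cofr eps) (fconj q) in
    (forall Qs, is_Q q r M0 Qs -> admits_constraint eps (rhs_KN Qs j)) /\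
    (forall Qs, is_Q q r (P0_II q r) Qs -> admits_constraint eps (rhs_II q r Qs j)) /\
    (forall alpha : CC, fst alpha = 0 ->
       forall Qs, is_Q q r (P0_B alpha q r) Qs ->
         admits_constraint eps (rhs_B alpha q r Qs j)).
Proof.
  intros eps j q He Hj Hq r.
  assert (Hd : forall P Qs, Ssym eps P -> is_Q q r P Qs -> forall k, Ssym eps (MDx (Qs k))).
  { intros P Qs HP HQ k. assert (HS := Qsym eps q P Qs He HP HQ).
    destruct HQ as [_ [_ [Hs _]]].
    destruct (Hs k) as [_ [[S1 [S2 _]] _]].
    apply S_Dx; auto. apply (S1 nil). apply (S2 nil). }
  split; [|split].
  - intros Qs HQ. apply S_adm. unfold rhs_KN. apply (Hd M0); auto. apply S_M0.
  - intros Qs HQ. apply S_adm. unfold rhs_II.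
    assert (HP := S_PII eps q He).
    assert (HS := Qsym eps q _ Qs He HP HQ).
    apply S_add; auto. apply S_add; auto.
    + apply (Hd _ _ HP HQ).
    + apply S_comm; auto.
    + apply S_comm; auto. apply S_u.
  - intros alpha Ha Qs HQ. apply S_adm. unfold rhs_B.
    assert (HP := S_PB eps q alpha He Ha).
    assert (HS := Qsym eps q _ Qs He HP HQ).
    apply S_add; auto. apply S_add; auto.
    + apply (Hd _ _ HP HQ).
    + apply S_comm; auto.
    + apply S_comm; auto. apply S_u. unfold Msub, B_op.
      apply S_add; auto. apply S_opp; auto. apply S_scal; auto.
      destruct alpha; simpl in *; subst; ring.
Qed.
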